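(* In the setting described in the context, for arbitrary but fixed $\tilde u\in U_h^{(2)}$ and $\tilde z\in V_h^{(2)}$, the error representation $$J(u_h^{(2)})-J(\tilde u)=\tfrac12\rho(\tilde u)(z_h^{(2)}-\tilde z)+\tfrac12\rho^*(\tilde u,\tilde z)(u_h^{(2)}-\tilde u)+\rho(\tilde u)(\tilde z)+\mathcal{R}^{(3)(2)}$$ holds.
   Context: Let $U$ and $V$ be real Banach spaces with dual $V^*$. Let $\mathcal{A}:U\to V^*$ be a (nonlinear) operator that is three times continuously Fréchet differentiable, and let $J:U\to\mathbb{R}$ be three times continuously Fréchet differentiable. Notation: $\mathcal{A}(w)(v)$ is the value of $\mathcal{A}(w)\in V^*$ at $v\in V$. For fixed $v$, $\mathcal{A}'(w)(\varphi,v)$, $\mathcal{A}''(w)(\varphi,\psi,v)$ and $\mathcal{A}'''(w)(\varphi,\psi,\chi,v)$ denote the first, second and third Fréchet derivatives of $w\mapsto\mathcal{A}(w)(v)$ at $w$ in the directions $\varphi,\psi,\chi\in U$. Analogously, $J'(w)(\varphi)$ and $J'''(w)(\varphi,\psi,\chi)$ denote derivatives of $J$. Let $U_h^{(2)}\subset U$ and $V_h^{(2)}\subset V$ be finite-dimensional subspaces. Let $u_h^{(2)}\in U_h^{(2)}$ satisfy $\mathcal{A}(u_h^{(2)})(v)=0$ for all $v\in V_h^{(2)}$. Let $z_h^{(2)}\in V_h^{(2)}$ satisfy $\mathcal{A}'(u_h^{(2)})(\varphi,z_h^{(2)})=J'(u_h^{(2)})(\varphi)$ for all $\varphi\in U_h^{(2)}$.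 Define $\rho(\tilde u)(v):=-\mathcal{A}(\tilde u)(v)$ and $\rho^*(\tilde u,\tilde z)(\varphi):=J'(\tilde u)(\varphi)-\mathcal{A}'(\tilde u)(\varphi,\tilde z)$. With $e^{(2)}:=u_h^{(2)}-\tilde u$ and $e^{(2),*}:=z_h^{(2)}-\tilde z$, define $$\mathcal{R}^{(3)(2)}:=\frac12\int_0^1\Big[J'''(\tilde u+se^{(2)})(e^{(2)},e^{(2)},e^{(2)})-\mathcal{A}'''(\tilde u+se^{(2)})(e^{(2)},e^{(2)},e^{(2)},\tilde z+se^{(2),*})-3\mathcal{A}''(\tilde u+se^{(2)})(e^{(2)},e^{(2)},e^{(2),*})\Big]s(s-1)\,ds.$$ *)

(* Defs.v *)
From HB Require Import structures.
From mathcomp Require Import all_boot all_order all_algebra.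
From mathcomp Require Import all_classical all_reals all_analysis.
Set Implicit Arguments. Unset Strict Implicit. Unset Printing Implicit Defensive.
Import Order.TTheory GRing.Theory Num.Theory.
Import numFieldNormedType.Exports.
Local Open Scope classical_set_scope.
Local Open Scope ring_scope.

Definition fin_dim_subspace {R : realType} {U : normedModType R} (S : set U) : Prop :=
  exists (n : nat) (b : 'I_n -> U),
    S = [set x | exists c : 'I_n -> R, x = \sum_(i < n) c i *: b i].

(* [f : U -> R] is three times continuously Frechet differentiable, with
   f' = f1, f'' = f2, f''' = f3 (f1 w phi = f'(w)(phi), etc.):
   each derivative is the Frechet differential of the previous one,
   and the third derivative depends continuously on the base point. *)
Definition C3_derivs {R : realType} {U : normedModType R} (f : U -> R)
    (f1 : U -> U -> R) (f2 : U -> U -> U -> R) (f3 : U -> U -> U -> U -> R) : Prop :=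
  [/\ (forall w : U, is_diff w f (f1 w)),
      (forall (phi w : U), is_diff w (fun w' => f1 w' phi) (f2 w phi)),
      (forall (phi psi w : U), is_diff w (fun w' => f2 w' phi psi) (f3 w phi psi)) &
      (forall (phi psi chi : U), continuous (fun w => f3 w phi psi chi))].

Definition dual_valued {R : realType} {U V : normedModType R} (A : U -> V -> R) : Prop :=
  forall w : U,
    (forall (a : R) (v1 v2 : V), A w (a *: v1 + v2) = a * A w v1 + A w v2)
    /\ continuous (A w).

Definition rho {R : realType} {U V : normedModType R} (A : U -> V -> R)
  (ut : U) (v : V) : R := - A ut v.

Definition rho_star {R : realType} {U V : normedModType R}
  (J1 : U -> U -> R) (A1 : U -> U -> V -> R) (ut : U) (zt : V) (phi : U) : R :=
  J1 ut phi - A1 ut phi zt.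

Definition remainder32 {R : realType} {U V : normedModType R}
  (J3 : U -> U -> U -> U -> R) (A2 : U -> U -> U -> V -> R)
  (A3 : U -> U -> U -> U -> V -> R) (ut uh : U) (zt zh : V) : \bar R :=
  let e := uh - ut in
  let es := zh - zt in
  ((1/2)%:E * \int[@lebesgue_measure R]_(s in `[0%R, 1%R])
     ((J3 (ut + s *: e) e e e
       - A3 (ut + s *: e) e e e (zt + s *: es)
       - 3 * A2 (ut + s *: e) e e es) * (s * (s - 1)))%:E)%E.

(* Main.v *)
Require Import Defs.
From HB Require Import structures.
From mathcomp Require Import all_boot all_order all_algebra.
From mathcomp Require Import all_classical all_reals all_analysis.
Import Order.TTheory GRing.Theory Num.Theory.
Import numFieldNormedType.Exports.
Local Open Scope classical_set_scope.
Local Open Scope ring_scope.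
From mathcomp Require Import ring lra.
Lemma is_derive_conv (R : realType) (f f' : R -> R) (x d d' : R) :
  is_derive x (1:R) f' d' -> f =1 f' -> d' = d -> is_derive x (1:R) f d.
Proof. by move=> h /funext -> <-. Qed.

Lemma trap (R : realType) (g g1 g2 g3 : R -> R) :
  (forall s : R, is_derive s (1:R) g (g1 s)) ->
  (forall s : R, is_derive s (1:R) g1 (g2 s)) ->
  (forall s : R, is_derive s (1:R) g2 (g3 s)) ->
  continuous g3 ->
  ((1/2)%:E * \int[@lebesgue_measure R]_(s in `[0%R, 1%R]) (g3 s * (s * (s - 1)))%:E
   = (g 1 - g 0 - (g1 0 + g1 1) / 2)%:E)%E.
Proof.
move=> d1 d2 d3 c3.
pose P := fun s : R => s * (s - 1).
pose Q := fun s : R => 2 * s - 1.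
have dP : forall s : R, is_derive s (1:R) P (Q s).
  move=> s.
  have h : is_derive s (1:R) (id * (id - cst 1)) (id s *: (1 - 0) + (id - cst 1) s *: 1).
    apply: is_deriveM.
  apply: is_derive_conv h _ _ => [x|]; rewrite /P /Q /=.
  - by [].
  - rewrite !fctE /GRing.scale /=; lra.
pose Phi := fun s => g2 s * P s - g1 s * Q s + 2 * g s.
have dPhi : forall s : R, is_derive s (1:R) Phi (g3 s * P s).
  move=> s.
  have h : is_derive s (1:R) (g2 * P - g1 * Q + cst 2 * g)
     (g2 s *: Q s + P s *: g3 s - (g1 s *: 2 + Q s *: g2 s) + (cst 2 s *: g1 s + g s *: 0)).
    have dQ : is_derive s (1:R) Q 2.
      have h2 : is_derive s (1:R) (cst 2 * id - cst 1) ((cst 2 s *: 1 + id s *: 0) - 0).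
        by apply: is_deriveB; apply: is_deriveM.
      by apply: is_derive_conv h2 _ _ => [x|]; rewrite /Q ?fctE /GRing.scale /=; lra.
    apply: is_deriveD.
  apply: is_derive_conv h _ _ => [x|]; rewrite /Phi /P /Q ?fctE /GRing.scale /=; lra.
have cf : continuous (fun s => g3 s * P s).
  move=> x; apply: continuousM; first exact: c3.
  apply: differentiable_continuous.
  by apply/derivable1_diffP; exact: ex_derive.
have cf' : {within `[(0:R), 1], continuous (fun s => g3 s * P s)}.
  by apply: continuous_subspaceT.
have hF := @continuous_FTC2 R (fun s => g3 s * P s) Phi 0 1 ltr01 cf'.
rewrite /P in hF; rewrite hF; last 2 first.
- split.
  + by move=> x _; exact: ex_derive.
  + apply: cvg_at_right_filter; apply: differentiable_continuous.
    by apply/derivable1_diffP; exact: ex_derive.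
  + apply: cvg_at_left_filter; apply: differentiable_continuous.
    by apply/derivable1_diffP; exact: ex_derive.
- by move=> x _; rewrite derive1E derive_val.
rewrite -EFinB -EFinM; congr EFin.
rewrite /Phi /P /Q; lra.
Qed.


Lemma line_deriv (R : realType) (U : normedModType R) (F : U -> R) (F1 : U -> U -> R)
  (ut e : U) :
  (forall w, is_diff w F (F1 w)) ->
  forall s : R, is_derive s (1:R) (fun s => F (ut + s *: e)) (F1 (ut + s *: e) e).
Proof.
move=> hF s.
have hl : is_diff s (fun t : R => ut + t *: e) (fun t => t *: e).
  have h : is_diff s (cst ut + ( *:%R ^~ e)) (0 + ( *:%R ^~ e)).
    exact: is_diffD.
  by apply: is_diff_eq; rewrite add0r.
have hc : is_diff s (F \o (fun t : R => ut + t *: e)) (F1 (ut + s *: e) \o (fun t => t *: e)).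
  exact: is_diff_comp.
apply: DeriveDef.
  exact: diff_derivable.
by rewrite deriveE // diff_val /= scale1r.
Qed.

Lemma diff_linv (R : realType) (U V : normedModType R) (f : V -> U -> R)
  (df : V -> U -> U -> R) :
  (forall w a v1 v2, f (a *: v1 + v2) w = a * f v1 w + f v2 w) ->
  (forall v w, is_diff w (f v) (df v w)) ->
  forall w phi a v1 v2, df (a *: v1 + v2) w phi = a * df v1 w phi + df v2 w phi.
Proof.
move=> hl hd w phi a v1 v2.
have e : f (a *: v1 + v2) = a *: f v1 + f v2.
  by apply/funext => x; rewrite hl !fctE.
have h1 := @diff_val _ _ _ _ _ _ _ (hd (a *: v1 + v2) w).
have h2 : is_diff w (a *: f v1 + f v2) (a *: df v1 w + df v2 w).
  by apply: is_diffD; apply: is_diffZ.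
have h3 := @diff_val _ _ _ _ _ _ _ h2.
rewrite e h3 in h1.
by rewrite -h1 !fctE.
Qed.

Lemma line_cont (R : realType) (U : normedModType R) (G : U -> R) (ut e : U) :
  continuous G -> continuous (fun s : R => G (ut + s *: e)).
Proof.
move=> hG s.
have hl : is_diff s (fun t : R => ut + t *: e) (fun t => t *: e).
  have h : is_diff s (cst ut + ( *:%R ^~ e)) (0 + ( *:%R ^~ e)).
    exact: is_diffD.
  by apply: is_diff_eq; rewrite add0r.
apply: (@continuous_comp _ _ _ (fun t : R => ut + t *: e) G).
  exact: differentiable_continuous.
exact: hG.
Qed.

Lemma fds_sub (R : realType) (U : normedModType R) (S : set U) x y :
  fin_dim_subspace S -> S x -> S y -> S (x - y).
Proof.
move=> [n [b ->]] [c1 ->] [c2 ->]; exists (fun i => c1 i - c2 i).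
by rewrite -sumrB; apply: eq_bigr => i _; rewrite scalerBl.
Qed.

Ltac dtac := repeat (first [ apply: is_deriveB | apply: is_deriveD | apply: is_deriveM
  | exact: is_derive_cst | exact: is_derive_id
  | match goal with H : forall s, is_derive _ _ ?f _ |- is_derive _ _ ?f _ => apply: H end ]).

Theorem mainTheorem5 (R : realType)
  (U V : completeNormedModType R)
  (A : U -> V -> R) (A1 : U -> U -> V -> R) (A2 : U -> U -> U -> V -> R)
  (A3 : U -> U -> U -> U -> V -> R)
  (J : U -> R) (J1 : U -> U -> R) (J2 : U -> U -> U -> R)
  (J3 : U -> U -> U -> U -> R)
  (hA : dual_valued A)
  (hAd : forall v : V, C3_derivs (fun w => A w v) (fun w phi => A1 w phi v)
           (fun w phi psi => A2 w phi psi v) (fun w phi psi chi => A3 w phi psi chi v))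
  (hJd : C3_derivs J J1 J2 J3)
  (Uh : set U) (Vh : set V)
  (hUh : fin_dim_subspace Uh) (hVh : fin_dim_subspace Vh)
  (uh : U) (huh : Uh uh) (huh_eq : forall v, Vh v -> A uh v = 0)
  (zh : V) (hzh : Vh zh)
  (hzh_eq : forall phi, Uh phi -> A1 uh phi zh = J1 uh phi)
  (ut : U) (hut : Uh ut) (zt : V) (hzt : Vh zt) :
  (J uh - J ut)%:E =
    ((1/2 * rho A ut (zh - zt) + 1/2 * rho_star J1 A1 ut zt (uh - ut)
      + rho A ut zt)%:E + remainder32 J3 A2 A3 ut uh zt zh)%E.
Proof.
have hlin : forall w a v1 v2, A w (a *: v1 + v2) = a * A w v1 + A w v2.
  by move=> w a v1 v2; case: (hA w) => h _; exact: h.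
have hA1 : forall v w, is_diff w (fun w => A w v) (fun phi => A1 w phi v).
  by move=> v; case: (hAd v).
have hA2 : forall v phi w, is_diff w (fun w => A1 w phi v) (fun psi => A2 w phi psi v).
  by move=> v; case: (hAd v).
have hA3 : forall v phi psi w, is_diff w (fun w => A2 w phi psi v) (fun chi => A3 w phi psi chi v).
  by move=> v; case: (hAd v).
have cA3 : forall v phi psi chi, continuous (fun w => A3 w phi psi chi v).
  by move=> v; case: (hAd v).
case: hJd => hJ1 hJ2 hJ3 cJ3.
have lin1 : forall w phi a v1 v2, A1 w phi (a *: v1 + v2) = a * A1 w phi v1 + A1 w phi v2.
  move=> w phi a v1 v2.
  exact: (@diff_linv R U V (fun v w => A w v) (fun v w phi => A1 w phi v)).
have lin2 : forall w phi psi a v1 v2,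
    A2 w phi psi (a *: v1 + v2) = a * A2 w phi psi v1 + A2 w phi psi v2.
  move=> w phi psi a v1 v2.
  exact: (@diff_linv R U V (fun v w => A1 w phi v) (fun v w psi => A2 w phi psi v)).
have lin3 : forall w phi psi chi a v1 v2,
    A3 w phi psi chi (a *: v1 + v2) = a * A3 w phi psi chi v1 + A3 w phi psi chi v2.
  move=> w phi psi chi a v1 v2.
  exact: (@diff_linv R U V (fun v w => A2 w phi psi v) (fun v w chi => A3 w phi psi chi v)).
rewrite /remainder32 /=.
set e := uh - ut. set es := zh - zt.
have he : Uh e by exact: fds_sub.
have hes : Vh es by exact: fds_sub.
pose g := fun s : R => J (ut + s *: e) - A (ut + s *: e) zt - s * A (ut + s *: e) es.
pose g1 := fun s : R => J1 (ut + s *: e) e - A1 (ut + s *: e) e zt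
   - (A (ut + s *: e) es + s * A1 (ut + s *: e) e es).
pose g2 := fun s : R => J2 (ut + s *: e) e e - A2 (ut + s *: e) e e zt
   - (2 * A1 (ut + s *: e) e es + s * A2 (ut + s *: e) e e es).
pose g3 := fun s : R => J3 (ut + s *: e) e e e - A3 (ut + s *: e) e e e zt
   - (3 * A2 (ut + s *: e) e e es + s * A3 (ut + s *: e) e e e es).
have dJ0 := @line_deriv _ _ _ _ ut e hJ1.
have dJ1 := @line_deriv _ _ _ _ ut e (hJ2 e).
have dJ2 := @line_deriv _ _ _ _ ut e (hJ3 e e).
have dAz0 := @line_deriv _ _ _ _ ut e (hA1 zt).
have dAz1 := @line_deriv _ _ _ _ ut e (hA2 zt e).
have dAz2 := @line_deriv _ _ _ _ ut e (hA3 zt e e).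
have dAe0 := @line_deriv _ _ _ _ ut e (hA1 es).
have dAe1 := @line_deriv _ _ _ _ ut e (hA2 es e).
have dAe2 := @line_deriv _ _ _ _ ut e (hA3 es e e).
have did : forall s : R, is_derive s (1:R) (@id R) 1 by move=> s; exact: is_derive_id.
have dg : forall s : R, is_derive s (1:R) g (g1 s).
  move=> s.
  have h : is_derive s (1:R) ((fun s => J (ut + s *: e)) - (fun s => A (ut + s *: e) zt)
      - (@id R) * (fun s => A (ut + s *: e) es))
      (J1 (ut + s *: e) e - A1 (ut + s *: e) e zt
        - (id s *: A1 (ut + s *: e) e es + A (ut + s *: e) es *: 1)).
    by dtac.
  apply: is_derive_conv h _ _ => [x|]; rewrite /g /g1 ?fctE /GRing.scale /=; lra.
have dg1 : forall s : R, is_derive s (1:R) g1 (g2 s).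
  move=> s.
  have h : is_derive s (1:R) ((fun s => J1 (ut + s *: e) e) - (fun s => A1 (ut + s *: e) e zt)
      - ((fun s => A (ut + s *: e) es) + (@id R) * (fun s => A1 (ut + s *: e) e es)))
      (J2 (ut + s *: e) e e - A2 (ut + s *: e) e e zt
        - (A1 (ut + s *: e) e es + (id s *: A2 (ut + s *: e) e e es + A1 (ut + s *: e) e es *: 1))).
    by dtac.
  apply: is_derive_conv h _ _ => [x|]; rewrite /g1 /g2 ?fctE /GRing.scale /=; lra.
have dg2 : forall s : R, is_derive s (1:R) g2 (g3 s).
  move=> s.
  have h : is_derive s (1:R) ((fun s => J2 (ut + s *: e) e e) - (fun s => A2 (ut + s *: e) e e zt)
      - (cst 2 * (fun s => A1 (ut + s *: e) e es) + (@id R) * (fun s => A2 (ut + s *: e) e e es)))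
      (J3 (ut + s *: e) e e e - A3 (ut + s *: e) e e e zt
        - ((cst 2 s *: A2 (ut + s *: e) e e es + A1 (ut + s *: e) e es *: 0)
           + (id s *: A3 (ut + s *: e) e e e es + A2 (ut + s *: e) e e es *: 1))).
    by dtac.
  apply: is_derive_conv h _ _ => [x|]; rewrite /g2 /g3 ?fctE /GRing.scale /=; lra.
have cg3 : continuous g3.
  have -> : g3 = (fun s => J3 (ut + s *: e) e e e) - (fun s => A3 (ut + s *: e) e e e zt)
      - (cst 3 * (fun s => A2 (ut + s *: e) e e es) + (@id R) * (fun s => A3 (ut + s *: e) e e e es)).
    by apply/funext => x; rewrite /g3 !fctE.
  have c1 := @line_cont R U (fun w => J3 w e e e) ut e (cJ3 e e e).
  have c2 := @line_cont R U (fun w => A3 w e e e zt) ut e (cA3 zt e e e).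
  have c4 := @line_cont R U (fun w => A3 w e e e es) ut e (cA3 es e e e).
  have c3 : continuous (fun s : R => A2 (ut + s *: e) e e es).
    move=> x; apply: differentiable_continuous.
    by apply/derivable1_diffP; exact: ex_derive.
  move=> x.
  apply: continuousB; [apply: continuousB; [exact: c1 x| exact: c2 x] | ].
  apply: continuousD; apply: continuousM.
  - exact: cvg_cst.
  - exact: c3 x.
  - exact: cvg_id.
  - exact: c4 x.
have T := @trap _ _ _ _ _ dg dg1 dg2 cg3.
have hg3 : forall s : R, J3 (ut + s *: e) e e e - A3 (ut + s *: e) e e e (zt + s *: es)
    - 3 * A2 (ut + s *: e) e e es = g3 s.
  by move=> s; rewrite /g3 (addrC zt) lin3; lra.
under eq_integral do rewrite hg3.
rewrite T -EFinD; congr EFin.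
have eu : ut + 1 *: e = uh by rewrite scale1r /e addrC subrK.
have e0 : ut + 0 *: e = ut by rewrite scale0r addr0.
have a1 : A uh zt = 0 by exact: huh_eq.
have a2 : A uh es = 0 by exact: huh_eq.
have a3 : A1 uh e zh = J1 uh e by exact: hzh_eq.
have a4 : A1 uh e zh = A1 uh e es + A1 uh e zt.
  by rewrite -[A1 uh e es]mul1r -lin1 scale1r /es subrK.
rewrite /g /g1 /rho /rho_star !eu !e0 a1 a2.
lra.
Qed.
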